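(* Let $V\in\mathbb{C}^{N\times N}$ be unitary, $c_1,c_2\in\mathbb{R}$, $D=c_1I+c_2V$, and $b\neq0$. Let $q_j$, $l_{jj}$, $l_{j+1,j}$, $u_{j-1,j}$ ($j=1,\dots,k$) be produced by the unitary Arnoldi process (described in the context) without breakdown, with $Q_k,L_k,U_k$ as there. Let $T_k=c_1U_k+c_2L_k$ (a tridiagonal matrix) and set $\beta_j=-c_2l_{j+1,j}$, $\gamma_j=-c_1u_{j,j+1}$. Assume $T_k$ has an LU factorization $T_k=\tilde L_k\tilde U_k$ with $\tilde L_k$ lower triangular with diagonal entries $\tilde l_{jj}\neq0$ and $\tilde U_k$ unit upper triangular. Then $$\tilde l_{11}=c_1+c_2l_{11},\qquad \tilde l_{jj}=c_1+c_2l_{jj}-\frac{\beta_{j-1}\gamma_{j-1}}{\tilde l_{j-1,j-1}}\quad(2\le j\le k).$$ Define $\alpha_1=\|b\|_2/\tilde l_{11}$, $\alpha_j=\beta_{j-1}\alpha_{j-1}/\tilde l_{jj}$, $w_1=q_1$, $w_j=q_j+u_{j-1,j}q_{j-1}+\frac{\gamma_{j-1}}{\tilde l_{j-1,j-1}}w_{j-1}$, $x_0=0$ and $x_j=x_{j-1}+\alpha_jw_j$. Then $w_j=Q_jU_j\tilde U_j^{-1}e_j$, $\alpha_j=\|b\|_2\,e_j^TT_j^{-1}e_1$, and $x_k$ is the unique vector in $\mathrm{span}\{b,Db,\dots,D^{k-1}b\}$ whose residual $r_k=b-Dx_k$ is orthogonal to this Krylov subspace; namely $x_k=Q_kU_kz_k$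 with $T_kz_k=\|b\|_2e_1$. Moreover $r_k=r_{k-1}-\alpha_kDw_k$.
   Context: Unitary Arnoldi process: $q_1=b/\|b\|_2$, $q_0=0$, $v_0=0$, $u_{01}=0$; for $j=1,2,\dots$: $v_j=Vq_j$, $u_{j-1,j}=-(q_{j-1}^*v_j)/(q_{j-1}^*v_{j-1})$ for $j>1$, $l_{jj}=q_j^*v_j+u_{j-1,j}q_j^*v_{j-1}$, $\tilde q_{j+1}=v_j-l_{jj}q_j+u_{j-1,j}v_{j-1}$, $l_{j+1,j}=\|\tilde q_{j+1}\|_2$, $q_{j+1}=\tilde q_{j+1}/l_{j+1,j}$; no breakdown means all $l_{j+1,j}\neq0$ and denominators nonzero. $Q_k=[q_1,\dots,q_k]$; $L_k$ is $k\times k$ lower bidiagonal with diagonal $l_{jj}$ and subdiagonal $l_{j+1,j}$; $U_k$ is $k\times k$ upper bidiagonal with unit diagonal and superdiagonal $u_{j-1,j}$. These satisfy $VQ_kU_k=Q_kL_k+l_{k+1,k}q_{k+1}e_k^T$ with $Q_{k+1}$ orthonormal. $e_j$ is the $j$-th standard unit vector. *)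

(* Defs.v *)
(* Complex scalars: an arbitrary numClosedFieldType C
   (this includes the genuine complex numbers, e.g. R[i] for R : realType). *)
From HB Require Import structures.
From mathcomp Require Import all_boot all_order all_algebra.
Set Implicit Arguments. Unset Strict Implicit. Unset Printing Implicit Defensive.
Import Order.TTheory GRing.Theory Num.Theory.
Local Open Scope ring_scope.

Definition adjmx {C : numClosedFieldType} {m n : nat} (A : 'M[C]_(m, n)) : 'M[C]_(n, m) :=
  (map_mx Num.conj A)^T.

Definition dotc {C : numClosedFieldType} {n : nat} (x y : 'cV[C]_n) : C :=
  (adjmx x *m y) 0 0.

Definition norm2 {C : numClosedFieldType} {n : nat} (x : 'cV[C]_n) : C :=
  sqrtC (dotc x x).

Definition unitary_matrix {C : numClosedFieldType} {n : nat} (V : 'M[C]_n) : Prop :=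
  adjmx V *m V = 1%:M /\ V *m adjmx V = 1%:M.

(* Index conventions (all 1-based, as in the paper):
     q j = q_j,  v j = v_j,  l j = l_{jj},  ls j = l_{j+1,j},  u j = u_{j-1,j}. *)
Definition unitary_arnoldi {C : numClosedFieldType} {N : nat} (V : 'M[C]_N)
  (b : 'cV[C]_N) (k : nat) (q v : nat -> 'cV[C]_N) (l ls u : nat -> C) : Prop :=
  [/\ q 0%N = 0, v 0%N = 0, u 1%N = 0, q 1%N = (norm2 b)^-1 *: b &
   forall j : nat, (1 <= j <= k)%N ->
    [/\ v j = V *m q j,
        ((1 < j)%N -> dotc (q j.-1) (v j.-1) != 0 /\
                      u j = - dotc (q j.-1) (v j) / dotc (q j.-1) (v j.-1)),
        l j = dotc (q j) (v j) + u j * dotc (q j) (v j.-1),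
        ls j = norm2 (v j - l j *: q j + u j *: v j.-1) &
        ls j != 0 /\ q j.+1 = (ls j)^-1 *: (v j - l j *: q j + u j *: v j.-1)]].

Definition Qmx {C : numClosedFieldType} {N : nat} (q : nat -> 'cV[C]_N) (j : nat)
  : 'M[C]_(N, j) := \matrix_(i < N, a < j) q a.+1 i 0.

Definition Lmx {C : numClosedFieldType} (l ls : nat -> C) (j : nat) : 'M[C]_j :=
  \matrix_(a < j, b < j)
    if a == b :> nat then l a.+1 else if a == b.+1 :> nat then ls b.+1 else 0.

(* U_j : unit upper bidiagonal, superdiagonal u_{b-1,b} in column b *)
Definition Umx {C : numClosedFieldType} (u : nat -> C) (j : nat) : 'M[C]_j :=
  \matrix_(a < j, b < j)
    if a == b :> nat then 1 else if b == a.+1 :> nat then u b.+1 else 0.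

Definition Tmx {C : numClosedFieldType} (c1 c2 : C) (l ls u : nat -> C) (j : nat)
  : 'M[C]_j := c1 *: Umx u j + c2 *: Lmx l ls j.

(* 0-based entry access by natural numbers (0 outside the range) *)
Definition mxn {C : numClosedFieldType} {m n : nat} (A : 'M[C]_(m, n)) (i j : nat) : C :=
  match (insub i : option 'I_m), (insub j : option 'I_n) with
  | Some a, Some b => A a b
  | _, _ => 0
  end.

Definition leadmx {C : numClosedFieldType} {n : nat} (j : nat) (A : 'M[C]_n) : 'M[C]_j :=
  \matrix_(a < j, b < j) mxn A a b.

(* standard unit column vector with a 1 in (0-based) position i *)
Definition ecol {C : numClosedFieldType} (j i : nat) : 'cV[C]_j :=
  \col_(a < j) (a == i :> nat)%:R.

Definition in_krylov {C : numClosedFieldType} {N : nat} (D : 'M[C]_N) (b : 'cV[C]_N)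
  (k : nat) (y : 'cV[C]_N) : Prop :=
  exists cs : 'I_k -> C, y = \sum_(i < k) cs i *: (D ^+ i *m b).

(* Main.v *)
Require Import Defs.
From HB Require Import structures.
From mathcomp Require Import all_boot all_order all_algebra.
From mathcomp Require Import ring zify.
Set Implicit Arguments. Unset Strict Implicit. Unset Printing Implicit Defensive.
Import Order.TTheory GRing.Theory Num.Theory.
Local Open Scope ring_scope.

Section Gen.
Variable C : numClosedFieldType.

Lemma sum_nat1 (n t : nat) (F : nat -> C) : (t < n)%N ->
  (forall s, (s < n)%N -> s != t -> F s = 0) -> \sum_(s < n) F s = F t.
Proof.
move=> tn H; rewrite (bigD1 (Ordinal tn)) //= big1 ?addr0 // => i /= ne.
by apply: H => //; rewrite -(inj_eq val_inj) /= in ne.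
Qed.

Lemma sum_nat2 (n t : nat) (F : nat -> C) : (t.+1 < n)%N ->
  (forall s, (s < n)%N -> s != t -> s != t.+1 -> F s = 0) ->
  \sum_(s < n) F s = F t + F t.+1.
Proof.
move=> tn H.
have -> : \sum_(s < n) F s = \sum_(s < n) ((if (s:nat) == t then F s else 0)
   + (if (s : nat) == t then 0 else F s)).
  by apply: eq_bigr => i _; case: eqP; rewrite ?addr0 ?add0r.
rewrite big_split /= (@sum_nat1 n t (fun s => if s == t then F s else 0)); last 2 first.
- exact: ltnW.
- by move=> s _ /negbTE ->.
rewrite (@sum_nat1 n t.+1 (fun s => if s == t then 0 else F s)) //; last first.
  move=> s sn ne; case: eqP => // /eqP st; exact: H.
by rewrite eqxx (gtn_eqF (ltnSn t)).
Qed.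

Lemma sum_trunc (j k : nat) (F : nat -> C) : (j <= k)%N ->
  (forall s, (j <= s)%N -> F s = 0) -> \sum_(s < k) F s = \sum_(s < j) F s.
Proof.
move=> jk H; elim: k jk => [|k IH]; first by rewrite leqn0 => /eqP ->.
rewrite leq_eqVlt => /orP [/eqP <- //|]; rewrite ltnS => jk.
by rewrite big_ord_recr /= H // addr0 IH.
Qed.

Lemma sum_delta (n a : nat) (F : nat -> C) :
  \sum_(s < n) (((s : nat) == a)%:R * F s) = if (a < n)%N then F a else 0.
Proof.
case: ifP => an.
  rewrite (@sum_nat1 n a (fun s => (s == a)%:R * F s)) ?eqxx ?mul1r //.
  by move=> s _ /negbTE ->; rewrite mul0r.
rewrite big1 // => i _; case: eqP => [ia|]; last by rewrite mul0r.
by move: (ltn_ord i); rewrite ia an.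
Qed.

Variable N : nat.
Implicit Types x y : 'cV[C]_N.

Lemma dotcE x y : dotc x y = \sum_(i < N) (x i 0)^* * y i 0.
Proof. by rewrite /dotc /adjmx !mxE; apply: eq_bigr => i _; rewrite !mxE. Qed.

Lemma dotcDr x y z : dotc x (y + z) = dotc x y + dotc x z.
Proof. by rewrite !dotcE -big_split; apply: eq_bigr => i _; rewrite mxE mulrDr. Qed.
Lemma dotcZr x y a : dotc x (a *: y) = a * dotc x y.
Proof. by rewrite !dotcE mulr_sumr; apply: eq_bigr => i _; rewrite mxE mulrCA. Qed.
Lemma dotcNr x y : dotc x (- y) = - dotc x y.
Proof. by rewrite -scaleN1r dotcZr mulN1r. Qed.
Lemma dotcBr x y z : dotc x (y - z) = dotc x y - dotc x z.
Proof. by rewrite dotcDr dotcNr. Qed.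
Lemma dotc0r x : dotc x 0 = 0.
Proof. by rewrite dotcE big1 // => i _; rewrite mxE mulr0. Qed.
Lemma dotc0l x : dotc 0 x = 0.
Proof. by rewrite dotcE big1 // => i _; rewrite mxE rmorph0 /= mul0r. Qed.
Lemma dotcC x y : dotc y x = (dotc x y)^*.
Proof.
rewrite !dotcE rmorph_sum /=; apply: eq_bigr => i _.
by rewrite rmorphM /= conjCK mulrC.
Qed.
Lemma dotcDl x y z : dotc (x + y) z = dotc x z + dotc y z.
Proof. by rewrite dotcC dotcDr rmorphD /= -!dotcC. Qed.
Lemma dotcZl x y a : dotc (a *: x) y = a^* * dotc x y.
Proof. by rewrite dotcC dotcZr rmorphM /= -dotcC. Qed.
Lemma dotcBl x y z : dotc (x - y) z = dotc x z - dotc y z.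
Proof. by rewrite -scaleN1r dotcDl dotcZl rmorphN1 /= mulN1r. Qed.

Lemma dotc_ge0 x : 0 <= dotc x x.
Proof. by rewrite dotcE sumr_ge0 // => i _; rewrite mulrC mul_conjC_ge0. Qed.

Lemma dotc_eq0 x : dotc x x = 0 -> x = 0.
Proof.
rewrite dotcE => /eqP; rewrite psumr_eq0; last by move=> i _; rewrite mulrC mul_conjC_ge0.
move=> /allP H; apply/matrixP => i j; rewrite ord1 mxE.
by have := H i (mem_index_enum _); rewrite mulrC mul_conjC_eq0 => /eqP.
Qed.

Lemma norm2_conj x : (norm2 x)^* = norm2 x.
Proof. by apply: conj_Creal; apply: ger0_real; rewrite sqrtC_ge0 dotc_ge0. Qed.

Lemma norm2_sq x : norm2 x * norm2 x = dotc x x.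
Proof. by rewrite -expr2 sqrtCK. Qed.

Lemma norm2_eq0 x : norm2 x = 0 -> x = 0.
Proof. by move=> h; apply: dotc_eq0; rewrite -norm2_sq h mulr0. Qed.

Lemma dotc_normalize x : norm2 x != 0 ->
  dotc ((norm2 x)^-1 *: x) ((norm2 x)^-1 *: x) = 1.
Proof.
move=> nz; rewrite dotcZl dotcZr fmorphV /= norm2_conj -norm2_sq.
set s := norm2 x; by rewrite mulrA -[_ * (s * s)]mulrA [s^-1 * _]mulrC -!mulrA mulrA mulVf // divff // mulr1.
Qed.

Lemma dotc_unitary (V : 'M[C]_N) x y : adjmx V *m V = 1%:M ->
  dotc (V *m x) (V *m y) = dotc x y.
Proof.
move=> H; rewrite /dotc /adjmx map_mxM trmx_mul -!mulmxA (mulmxA _ V).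
by rewrite -/(adjmx V) H mul1mx.
Qed.


End Gen.


Fixpoint dd (C : numClosedFieldType) (l ls : nat -> C) (i : nat) : C :=
  match i with 0 => 1 | 1 => 1 | S i' => - (l i')^* / (ls i')^* * dd l ls i' end.

Section Arn.
Variables (C : numClosedFieldType) (N : nat) (V : 'M[C]_N) (b : 'cV[C]_N) (k : nat).
Variables (q v : nat -> 'cV[C]_N) (l ls u : nat -> C).
Hypothesis HV : adjmx V *m V = 1%:M.
Hypothesis Ha : unitary_arnoldi V b k q v l ls u.
Hypothesis bnz : b != 0.

Lemma q0 : q 0 = 0. Proof. by case: Ha. Qed.

Lemma vq j : (j <= k)%N -> v j = V *m q j.
Proof.
case: Ha => qz v0 _ _ Hj; case: j => [|j] jk; first by rewrite v0 qz mulmx0.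
by case: (Hj j.+1); rewrite ?jk.
Qed.

Lemma arel j : (1 <= j <= k)%N ->
  ls j *: q j.+1 = V *m q j - l j *: q j + u j *: (V *m q j.-1).
Proof.
move=> jk; case: Ha => _ _ _ _ Hj.
case: (Hj j jk) => _ _ _ _ [nz ->]; case/andP: jk => _ jk.
by rewrite scalerA divff // scale1r (vq jk) (vq (leq_trans (leq_pred j) jk)).
Qed.

Lemma ls_nz j : (1 <= j <= k)%N -> ls j != 0.
Proof. by move=> jk; case: Ha => _ _ _ _ Hj; case: (Hj j jk) => _ _ _ _ []. Qed.

Lemma Pprop i : (1 <= i <= k.+1)%N -> forall x,
  (forall t, (1 <= t < i)%N -> dotc (q t) x = 0) ->
  dotc (q i) (V *m x) = dd l ls i * dotc (q 1) (V *m x).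
Proof.
elim: i => [//|i IH] /andP[_ ik] x Hx.
case: i IH ik Hx => [|i] IH ik Hx; first by rewrite /= mul1r.
have ik' : (1 <= i.+1 <= k)%N by rewrite ltnS in ik; rewrite ik.
have IH' := IH (ltac:(by rewrite /= ltnW)) x (fun t ht => Hx t (ltac:(case/andP: ht => -> /= ?; exact: ltnW))).
have lsnz := ls_nz ik'.
have h0 : dotc (q i) x = 0.
  case: i {IH IH' ik ik' lsnz} Hx => [|i] Hx; first by rewrite q0 dotc0l.
  by apply: Hx; rewrite /= ltnW.
have E : (ls i.+1)^* * dotc (q i.+2) (V *m x) =
    - (l i.+1)^* * (dd l ls i.+1 * dotc (q 1) (V *m x)).
  rewrite -dotcZl arel // -scaleNr !dotcDl !dotcZl !dotc_unitary // Hx ?leqnn //.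
  by rewrite h0 IH' mulr0 addr0 add0r rmorphN.
have lsc : (ls i.+1)^* != 0 by rewrite conjC_eq0.
rewrite -[dotc (q i.+2) _](mulKf lsc) E.
have -> : dd l ls i.+2 = - (l i.+1)^* / (ls i.+1)^* * dd l ls i.+1 by [].
move: (dd l ls i.+1) (dotc (q 1) _) => d D.
by ring.
Qed.

Definition Orth m := forall a c, (1 <= a <= m)%N -> (1 <= c <= m)%N ->
  dotc (q a) (q c) = (a == c)%:R.

Lemma d_nz i : (1 <= i)%N -> (i < k)%N -> Orth i -> dd l ls i != 0.
Proof.
move=> i1 ik O; apply/eqP => d0.
case: Ha => _ _ _ _ Hj.
case: (Hj i.+1 (ltac:(by rewrite /= ik))) => _ /(_ (ltac:(by rewrite ltnS))) [nz _] _ _ _.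
have ik1 : (1 <= i <= k.+1)%N by rewrite i1 /= ltnW // ltnW.
move: nz; rewrite /= (vq (ltnW ik)) (Pprop ik1) ?d0 ?mul0r ?eqxx //.
move=> t /andP[t1 ti]; rewrite O ?t1 ?(ltnW ti) ?i1 ?leqnn //.
by rewrite (ltn_eqF ti).
Qed.

Lemma Orth1 : Orth 1.
Proof.
move=> [|[|a]] [|[|c]] //= _ _; case: Ha => _ _ _ -> _.
apply: dotc_normalize; apply/eqP => /norm2_eq0 /eqP; exact/negP.
Qed.

Lemma Orth_mono m m' : (m <= m')%N -> Orth m' -> Orth m.
Proof.
move=> mm O a c /andP[a1 am] /andP[c1 cm]; apply: O.
  by rewrite a1 (leq_trans am).
by rewrite c1 (leq_trans cm).
Qed.

Lemma Orth_step j : (1 <= j <= k)%N -> Orth j -> Orth j.+1.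
Proof.
move=> jk O.
have jk' := jk; case/andP: jk' => j1 jle.
case: Ha => _ _ _ _ Hj.
case: (Hj j jk) => vj Hu Hl Hls [lsnz qj1].
have vj1 := vq (leq_trans (leq_pred j) jle).
set y := v j - l j *: q j + u j *: v j.-1.
have yE : y = V *m (q j + u j *: q j.-1) - l j *: q j.
  by rewrite /y mulmxDr -scalemxAr -vj1 -vj addrAC.
have hj : dotc (q j) y = 0.
  rewrite /y -scaleNr !dotcDr !dotcZr O ?j1 ?leqnn // eqxx /= Hl mulr1; ring.
have hj1 : (1 < j)%N -> dotc (q j.-1) y = 0.
  move=> j2; rewrite /y; case: (Hu j2) => den ->.
  rewrite -scaleNr !dotcDr !dotcZr O; try lia.
  rewrite (_ : (j.-1 == j) = false); last by lia.
  by rewrite mulr0 addr0 ?mulNr -mulrA mulVf // mulr1 subrr.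
have key : forall a, (1 <= a <= j)%N -> dotc (q a) y = 0.
  move=> a /andP[a1]; rewrite leq_eqVlt => /orP [/eqP -> //|aj].
  have j2 : (1 < j)%N by apply: leq_trans aj.
  have hp : forall t, (1 <= t < j.-1)%N -> dotc (q t) (q j + u j *: q j.-1) = 0.
    move=> t ht; rewrite dotcDr dotcZr !O; try lia.
    rewrite (_ : (t == j) = false); last by lia.
    rewrite (_ : (t == j.-1) = false); last by lia.
    by rewrite mulr0 addr0.
  have ja : (1 <= j.-1 <= k.+1)%N by lia.
  have E1 := Pprop ja hp.
  have : dotc (q j.-1) (V *m (q j + u j *: q j.-1)) = 0.
    move: (hj1 j2); rewrite yE dotcBr dotcZr O; try lia.
    by rewrite (_ : (j.-1 == j) = false) ?mulr0 ?subr0 //; lia.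
  rewrite E1 => /eqP; rewrite mulf_eq0 => /orP[/eqP d0|/eqP D0].
    have : dd l ls j.-1 != 0.
      apply: d_nz; try lia.
      apply: Orth_mono O; lia.
    by rewrite d0 eqxx.
  have aj' : (1 <= a <= k.+1)%N by lia.
  have hpa : forall t, (1 <= t < a)%N -> dotc (q t) (q j + u j *: q j.-1) = 0.
    by move=> t ht; apply: hp; lia.
  rewrite yE dotcBr dotcZr (Pprop aj' hpa) D0 O; try lia.
  by rewrite (_ : (a == j) = false) ?mulr0 ?subr0 //; lia.
have key' : forall a, (1 <= a <= j)%N -> dotc (q a) (q j.+1) = 0.
  by move=> a ha; rewrite qj1 -/y dotcZr key ?mulr0.
move=> a c ha hc.
have [ea|na] := eqVneq a j.+1; have [ec|nc] := eqVneq c j.+1.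
- by rewrite ea ec eqxx qj1 -/y Hls dotc_normalize // -Hls.
- rewrite ea dotcC key' ?rmorph0; last by lia.
  by rewrite (_ : (j.+1 == c) = false) //; lia.
- rewrite ec key'; last by lia.
  by rewrite (_ : (a == j.+1) = false) //; lia.
- by apply: O; lia.
Qed.

Lemma orthoQ m : (m <= k.+1)%N -> Orth m.
Proof.
elim: m => [_|m IH mk]; first by move=> a c /andP[a1 a0]; move: (leq_trans a1 a0).
case: m IH mk => [|m] IH mk; first exact: Orth1.
apply: Orth_step; first by rewrite /= -ltnS.
by apply: IH; rewrite ltnW.
Qed.

End Arn.


Section MXN.
Variable C : numClosedFieldType.
Lemma mxnE m n (A : 'M[C]_(m, n)) (i : 'I_m) (j : 'I_n) : mxn A i j = A i j.
Proof. by rewrite /mxn !valK. Qed.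
Lemma mxn_outl m n (A : 'M[C]_(m, n)) i j : (m <= i)%N -> mxn A i j = 0.
Proof. by move=> h; rewrite /mxn insubF // ltnNge h. Qed.
Lemma mxn_outr m n (A : 'M[C]_(m, n)) i j : (n <= j)%N -> mxn A i j = 0.
Proof. by move=> h; rewrite /mxn; case: insub => // a; rewrite insubF // ltnNge h. Qed.
Lemma mxn_ord m n (A : 'M[C]_(m, n)) i j (hi : (i < m)%N) (hj : (j < n)%N) :
  mxn A i j = A (Ordinal hi) (Ordinal hj).
Proof. by rewrite -mxnE. Qed.
End MXN.

Definition Tn (C : numClosedFieldType) (c1 c2 : C) (l ls u : nat -> C) (a b : nat) : C :=
  c1 * (if a == b then 1 else if b == a.+1 then u b.+1 else 0) +
  c2 * (if a == b then l a.+1 else if a == b.+1 then ls b.+1 else 0).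

Lemma TmxE (C : numClosedFieldType) (c1 c2 : C) l ls u j (a b : 'I_j) :
  Tmx c1 c2 l ls u j a b = Tn c1 c2 l ls u a b.
Proof. by rewrite !mxE. Qed.

Section LU.
Variables (C : numClosedFieldType) (k : nat) (c1 c2 : C) (l ls u : nat -> C) (Lt Ut : 'M[C]_k).
Hypothesis HT : Tmx c1 c2 l ls u k = Lt *m Ut.
Hypothesis HL : forall i j : 'I_k, (i < j)%N -> Lt i j = 0.
Hypothesis HLd : forall i : 'I_k, Lt i i != 0.
Hypothesis HU : forall i j : 'I_k, (j < i)%N -> Ut i j = 0.
Hypothesis HUd : forall i : 'I_k, Ut i i = 1.

Local Notation Ln := (mxn Lt).
Local Notation Un := (mxn Ut).
Local Notation T := (Tn c1 c2 l ls u).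

Lemma HTn a b : (a < k)%N -> (b < k)%N -> T a b = \sum_(t < k) Ln a t * Un t b.
Proof.
move=> ha hb; have := congr1 (fun M : 'M[C]_k => M (Ordinal ha) (Ordinal hb)) HT.
rewrite /= TmxE mxE => ->; apply: eq_bigr => t _.
by rewrite -(mxnE Lt (Ordinal ha)) -(mxnE Ut _ (Ordinal hb)).
Qed.

Lemma Lnlow a t : (a < t)%N -> Ln a t = 0.
Proof.
move=> at'; case: (ltnP t k) => tk; last exact: mxn_outr.
have ak : (a < k)%N by lia.
by rewrite (mxn_ord _ ak tk) HL.
Qed.

Lemma Unup t b : (b < t)%N -> Un t b = 0.
Proof.
move=> bt; case: (ltnP t k) => tk; last exact: mxn_outl.
have bk : (b < k)%N by lia.
by rewrite (mxn_ord _ tk bk) HU.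
Qed.

Lemma Und t : (t < k)%N -> Un t t = 1.
Proof. by move=> tk; rewrite (mxn_ord _ tk tk) HUd. Qed.

Lemma Lnd t : (t < k)%N -> Ln t t != 0.
Proof. by move=> tk; rewrite (mxn_ord _ tk tk) HLd. Qed.

Lemma Tn0 a b : (a.+1 < b)%N \/ (b.+1 < a)%N -> T a b = 0.
Proof.
move=> h; rewrite /Tn (_ : (a == b) = false); last by lia.
rewrite (_ : (b == a.+1) = false); last by lia.
by rewrite (_ : (a == b.+1) = false) ?mulr0 ?addr0 //; lia.
Qed.

Lemma E1 a t : (a < k)%N -> (t.+1 < a)%N -> Ln a t = 0.
Proof.
move=> ak; elim/ltn_ind: t => t IH ta.
have tk : (t < k)%N by lia.
have := HTn ak tk; rewrite Tn0; last by right.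
rewrite (@sum_nat1 _ k t (fun s => Ln a s * Un s t)) // ?Und // ?mulr1 //.
move=> s sk st; case: (ltnP s t) => h.
  by rewrite IH ?mul0r //; lia.
by rewrite Unup ?mulr0 //; lia.
Qed.

Lemma E3 t b : (b < k)%N -> (t.+1 < b)%N -> Un t b = 0.
Proof.
move=> bk; elim/ltn_ind: t => t IH tb.
have tk : (t < k)%N by lia.
have := HTn tk bk; rewrite Tn0; last by left.
rewrite (@sum_nat1 _ k t (fun s => Ln t s * Un s b)) //.
  by move/esym/eqP; rewrite mulf_eq0 (negbTE (Lnd tk)) /= => /eqP.
move=> s sk st; case: (ltnP s t) => h.
  by rewrite IH ?mulr0 //; lia.
by rewrite Lnlow ?mul0r //; lia.
Qed.

Lemma E0 : (0 < k)%N -> Ln 0 0 = c1 + c2 * l 1.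
Proof.
move=> k0; have := HTn k0 k0.
rewrite (@sum_nat1 _ k 0 (fun s => Ln 0 s * Un s 0)) // ?Und // ?mulr1.
  by rewrite /Tn eqxx !mulr1 => <-.
by move=> s sk s0; rewrite Lnlow ?mul0r //; lia.
Qed.

Lemma E2 b : (b.+1 < k)%N -> Ln b.+1 b = c2 * ls b.+1.
Proof.
move=> bk; have := @HTn b.+1 b bk (ltnW bk).
rewrite (@sum_nat1 _ k b (fun s => Ln b.+1 s * Un s b)) ?Und ?mulr1; try lia.
  move=> <-; rewrite /Tn (_ : (b.+1 == b) = false); last by lia.
  by rewrite (_ : (b == b.+2) = false) ?eqxx ?mulr0 ?add0r //; lia.
move=> s sk sb; case: (ltnP s b) => h.
  by rewrite E1 ?mul0r //; lia.
by rewrite Unup ?mulr0 //; lia.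
Qed.

Lemma E4 a : (a.+1 < k)%N -> Ln a a * Un a a.+1 = c1 * u a.+2.
Proof.
move=> ak; have := @HTn a a.+1 (ltnW ak) ak.
rewrite (@sum_nat1 _ k a (fun s => Ln a s * Un s a.+1)); try lia.
  move=> <-; rewrite /Tn (_ : (a == a.+1) = false); last by lia.
  by rewrite (_ : (a == a.+2) = false) ?eqxx ?mulr0 ?addr0 //; lia.
move=> s sk sa; case: (ltnP s a) => h.
  by rewrite E3 ?mulr0 //; lia.
by rewrite Lnlow ?mul0r //; lia.
Qed.

Lemma E5 a : (a.+1 < k)%N ->
  Ln a.+1 a.+1 = c1 + c2 * l a.+2 - Ln a.+1 a * Un a a.+1.
Proof.
move=> ak; have := @HTn a.+1 a.+1 ak ak.
rewrite (@sum_nat2 _ k a (fun s => Ln a.+1 s * Un s a.+1)) ?Und //.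
  by rewrite /Tn eqxx !mulr1 => ->; rewrite addrC addKr.
move=> s sk sa sa1; case: (ltnP s a) => h.
  by rewrite E1 ?mul0r //; lia.
by rewrite Lnlow ?mul0r //; lia.
Qed.

Lemma lead_fact j : (j <= k)%N ->
  Tmx c1 c2 l ls u j = leadmx j Lt *m leadmx j Ut.
Proof.
move=> jk; apply/matrixP => a b; have ha := ltn_ord a; have hb := ltn_ord b.
rewrite TmxE !mxE HTn; [|lia|lia].
rewrite (@sum_trunc _ j k (fun s => Ln a s * Un s b)) //.
  by apply: eq_bigr => s _; rewrite !mxE.
by move=> s js; rewrite Lnlow ?mul0r //; lia.
Qed.

Lemma lead_L_unit j : (j <= k)%N -> leadmx j Lt \in unitmx.
Proof.
move=> jk; rewrite unitmxE det_trig.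
  rewrite unitfE prodf_seq_neq0; apply/allP => i _ /=; have := ltn_ord i; rewrite mxE => ij; apply: Lnd; lia.
apply/is_trig_mxP => i i' h; rewrite mxE Lnlow //.
Qed.

Lemma lead_U_unit j : (j <= k)%N -> leadmx j Ut \in unitmx.
Proof.
move=> jk; rewrite -unitmx_tr unitmxE det_trig.
  rewrite big1 ?unitr1 // => i _; have := ltn_ord i; rewrite !mxE => ij; apply: Und; lia.
apply/is_trig_mxP => i i' h; rewrite !mxE Unup //.
Qed.

End LU.


Section Spans.
Variables (C : numClosedFieldType) (N : nat).
Definition Sp (f : nat -> 'cV[C]_N) m y := exists c : nat -> C, y = \sum_(i < m) c i *: f i.

Variable f : nat -> 'cV[C]_N.

Lemma Sp0 m : Sp f m 0.
Proof. by exists (fun _ => 0); rewrite big1 // => i _; rewrite scale0r. Qed.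

Lemma SpD m y z : Sp f m y -> Sp f m z -> Sp f m (y + z).
Proof.
move=> [c ->] [d ->]; exists (fun i => c i + d i).
by rewrite -big_split; apply: eq_bigr => i _; rewrite scalerDl.
Qed.

Lemma SpZ m a y : Sp f m y -> Sp f m (a *: y).
Proof.
move=> [c ->]; exists (fun i => a * c i).
by rewrite scaler_sumr; apply: eq_bigr => i _; rewrite scalerA.
Qed.

Lemma SpN m y : Sp f m y -> Sp f m (- y).
Proof. by move=> h; rewrite -scaleN1r; apply: SpZ. Qed.

Lemma SpB m y z : Sp f m y -> Sp f m z -> Sp f m (y - z).
Proof. by move=> h1 h2; apply: SpD => //; apply: SpN. Qed.

Lemma Sp_mono m m' y : (m <= m')%N -> Sp f m y -> Sp f m' y.
Proof.
move=> mm [c ->]; exists (fun i => if (i < m)%N then c i else 0).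
elim: m' mm => [|m' IH]; first by rewrite leqn0 => /eqP ->; rewrite !big_ord0.
rewrite leq_eqVlt => /orP[/eqP <-|]; last first.
  by rewrite ltnS => h; rewrite big_ord_recr /= ltnNge h /= scale0r addr0 IH.
by apply: eq_bigr => i _; rewrite ltn_ord.
Qed.

Lemma Sp_f m i : (i < m)%N -> Sp f m (f i).
Proof.
move=> im; exists (fun j => (j == i)%:R).
rewrite (bigD1 (Ordinal im)) //= eqxx scale1r big1 ?addr0 // => j /= ne.
by rewrite -(inj_eq val_inj) /= in ne; rewrite (negbTE ne) scale0r.
Qed.

Lemma Sp_sum m n (F : 'I_n -> 'cV[C]_N) : (forall i, Sp f m (F i)) ->
  Sp f m (\sum_(i < n) F i).
Proof.
move=> H; elim/big_ind: _ => //; [exact: Sp0|exact: SpD].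
Qed.

End Spans.

Section Gen2.
Variables (C : numClosedFieldType) (N : nat).

Lemma QmxE (f : nat -> 'cV[C]_N) m (z : 'cV[C]_m) :
  Qmx f m *m z = \sum_(i < m) z i 0 *: f i.+1.
Proof.
apply/matrixP => r c; rewrite ord1 !mxE summxE; apply: eq_bigr => i _.
by rewrite !mxE mulrC.
Qed.

Lemma sumv1 n t (F : nat -> 'cV[C]_N) : (t < n)%N ->
  (forall s, (s < n)%N -> s != t -> F s = 0) -> \sum_(s < n) F s = F t.
Proof.
move=> tn H; rewrite (bigD1 (Ordinal tn)) //= big1 ?addr0 // => i /= ne.
by apply: H => //; rewrite -(inj_eq val_inj) /= in ne.
Qed.

Lemma Qmx_col (f : nat -> 'cV[C]_N) m a : (a < m)%N ->
  Qmx f m *m ecol m a = f a.+1.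
Proof.
move=> am; rewrite QmxE.
rewrite (eq_bigr (fun i : 'I_m => ((i : nat) == a)%:R *: f (i : nat).+1)); last first.
  by move=> i _; rewrite mxE.
rewrite (@sumv1 m a (fun i => (i == a)%:R *: f i.+1)) ?eqxx ?scale1r //.
by move=> s _ /negbTE ->; rewrite scale0r.
Qed.

Lemma dotc_suml n (F : 'I_n -> 'cV[C]_N) y :
  dotc (\sum_(i < n) F i) y = \sum_(i < n) dotc (F i) y.
Proof.
elim: n F => [|n IH] F; first by rewrite !big_ord0 dotc0l.
by rewrite !big_ord_recr /= dotcDl IH.
Qed.

End Gen2.


Section Main.
Variables (C : numClosedFieldType) (N : nat) (V : 'M[C]_N) (c1 c2 : C)
  (b : 'cV[C]_N) (k : nat)
  (q v : nat -> 'cV[C]_N) (l ls u : nat -> C)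
  (Lt Ut : 'M[C]_k)
  (alpha : nat -> C) (w x : nat -> 'cV[C]_N).
Hypothesis HV : adjmx V *m V = 1%:M.
Hypothesis bnz : b != 0.
Hypothesis k0 : (0 < k)%N.
Hypothesis Ha : unitary_arnoldi V b k q v l ls u.
Hypothesis HT : Tmx c1 c2 l ls u k = Lt *m Ut.
Hypothesis HL : forall i j : 'I_k, (i < j)%N -> Lt i j = 0.
Hypothesis HLd : forall i : 'I_k, Lt i i != 0.
Hypothesis HU : forall i j : 'I_k, (j < i)%N -> Ut i j = 0.
Hypothesis HUd : forall i : 'I_k, Ut i i = 1.

Local Notation D := (c1%:M + c2 *: V).
Local Notation Ln := (mxn Lt).
Local Notation Un := (mxn Ut).
Local Notation T := (Tn c1 c2 l ls u).

Lemma nb_nz : norm2 b != 0.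
Proof. by apply/eqP => /norm2_eq0 /eqP; apply/negP. Qed.

Lemma q0' : q 0 = 0. Proof. by case: Ha. Qed.

Lemma bq1 : b = norm2 b *: q 1.
Proof. by case: Ha => _ _ _ -> _; rewrite scalerA divff ?scale1r // nb_nz. Qed.

Lemma qq i a : (1 <= i <= k.+1)%N -> (a <= k.+1)%N -> dotc (q i) (q a) = (i == a)%:R.
Proof.
move=> hi ha; case: a ha => [|a] ha.
  by rewrite q0' dotc0r (_ : (i == 0) = false) //; lia.
have O := orthoQ HV Ha bnz (leqnn k.+1); rewrite /Orth in O.
by apply: O => //; lia.
Qed.

Lemma QU_entry m r (a : 'I_m) :
  (Qmx q m *m Umx u m) r a = q a.+1 r 0 + u a.+1 * q a r 0.
Proof.
rewrite mxE.
have ha := ltn_ord a.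
rewrite (eq_bigr (fun t : 'I_m => q (t : nat).+1 r 0 *
    (if (t : nat) == a then 1 else if (a : nat) == (t : nat).+1 then u a.+1 else 0))); last first.
  by move=> t _; rewrite !mxE.
case: (a : nat) ha => [|a'] ha.
  rewrite (@sum_nat1 _ m 0 (fun t => q t.+1 r 0 *
    (if t == 0%N then 1 else if 0%N == t.+1 then u 1 else 0))) //.
    by rewrite /= mulr1 q0' mxE mulr0 addr0.
  by move=> s _ /negbTE ->; rewrite mulr0.
rewrite (@sum_nat2 _ m a' (fun t => q t.+1 r 0 *
    (if t == a'.+1 then 1 else if a'.+1 == t.+1 then u a'.+2 else 0))) //.
  rewrite (_ : (a' == a'.+1) = false); last by lia.
  by rewrite eqxx mulr1 addrC mulrC.
move=> s _ h1 h2; rewrite (negbTE h2) (_ : (a'.+1 == s.+1) = false) ?mulr0 //; lia.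
Qed.

Lemma PU (z : 'cV[C]_k) :
  Qmx q k *m Umx u k *m z = \sum_(a < k) z a 0 *: (q a.+1 + u a.+1 *: q a).
Proof.
apply/matrixP => r c; rewrite ord1 !mxE summxE; apply: eq_bigr => a _.
by rewrite QU_entry !mxE mulrC.
Qed.

Lemma Vp a : (a < k)%N ->
  V *m (q a.+1 + u a.+1 *: q a) = l a.+1 *: q a.+1 + ls a.+1 *: q a.+2.
Proof.
move=> ak; rewrite (arel Ha (_ : (1 <= a.+1 <= k)%N)); last by lia.
rewrite /= mulmxDr -scalemxAr; set X := V *m q a.+1; set Y := V *m q a.
by rewrite addrA [l a.+1 *: _ + _]addrC subrK.
Qed.

Lemma Dp a : (a < k)%N ->
  D *m (q a.+1 + u a.+1 *: q a) = c1 *: (q a.+1 + u a.+1 *: q a)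
    + c2 *: (l a.+1 *: q a.+1 + ls a.+1 *: q a.+2).
Proof.
by move=> ak; rewrite mulmxDl mul_scalar_mx -scalemxAl Vp.
Qed.

Lemma dotc_sumr n (F : 'I_n -> 'cV[C]_N) y :
  dotc y (\sum_(i < n) F i) = \sum_(i < n) dotc y (F i).
Proof.
elim: n F => [|n IH] F; first by rewrite !big_ord0 dotc0r.
by rewrite !big_ord_recr /= dotcDr IH.
Qed.

Lemma Tdot i a : (i < k)%N -> (a < k)%N ->
  dotc (q i.+1) (D *m (q a.+1 + u a.+1 *: q a)) = T i a.
Proof.
move=> ik ak; rewrite Dp // !dotcDr !dotcZr !dotcDr !dotcZr !qq; try lia.
rewrite /Tn !eqSS.
have [->|ne] := eqVneq i a.
  rewrite (_ : (a.+1 == a) = false); last by lia.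
  by rewrite (_ : (a == a.+1) = false) /=; [ring|lia].
rewrite (_ : (i.+1 == a) = (a == i.+1)); last by apply/eqP/eqP => ->.
by case: (a == i.+1); case: (i == a.+1) => /=; ring.
Qed.

Lemma GC (z : 'cV[C]_k) (i : 'I_k) :
  dotc (q i.+1) (D *m (Qmx q k *m Umx u k *m z)) = (Tmx c1 c2 l ls u k *m z) i 0.
Proof.
rewrite PU mulmx_sumr dotc_sumr mxE; apply: eq_bigr => a _.
by rewrite -scalemxAr (dotcZr (q i.+1)) Tdot // TmxE mulrC.
Qed.

Lemma qb (i : 'I_k) : dotc (q i.+1) b = norm2 b * ((i : nat) == 0%N)%:R.
Proof. have hi := ltn_ord i; rewrite {1}bq1 dotcZr qq //; lia. Qed.

Local Notation qf := (fun i => q i.+1).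
Local Notation Kf := (fun i => D ^+ i *m b).

Lemma Vq_in j : (j <= k)%N -> Sp qf j.+1 (V *m q j).
Proof.
elim: j => [_|j IH jk]; first by rewrite q0' mulmx0; apply: Sp0.
have E : V *m q j.+1 = ls j.+1 *: q j.+2 + l j.+1 *: q j.+1 - u j.+1 *: (V *m q j).
  rewrite (arel Ha (_ : (1 <= j.+1 <= k)%N)) /=; last by lia.
  by rewrite addrAC addrK subrK.
rewrite E; apply: SpB; [apply: SpD|].
- by apply: SpZ; apply: Sp_f.
- by apply: SpZ; apply: (Sp_f _ (_ : (j < j.+2)%N)).
- by apply: SpZ; apply: (Sp_mono (_ : (j.+1 <= j.+2)%N)) => //; apply: IH; lia.
Qed.

Lemma VS m y : (m <= k)%N -> Sp qf m y -> Sp qf m.+1 (V *m y).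
Proof.
move=> mk [c ->]; rewrite mulmx_sumr; apply: Sp_sum => i.
rewrite -scalemxAr; apply: SpZ; have hi := ltn_ord i.
apply: (@Sp_mono _ _ _ i.+2); first lia.
apply: Vq_in; lia.
Qed.

Lemma DS m y : (m <= k)%N -> Sp qf m y -> Sp qf m.+1 (D *m y).
Proof.
move=> mk hy; rewrite mulmxDl mul_scalar_mx -scalemxAl; apply: SpD; apply: SpZ.
  exact: (Sp_mono (leqnSn m)).
exact: VS.
Qed.

Lemma Kry_S i : (i < k)%N -> Sp qf i.+1 (D ^+ i *m b).
Proof.
elim: i => [_|i IH ik]; first by rewrite expr0 mul1mx bq1; apply: SpZ; apply: Sp_f.
rewrite exprS -[D * _]/(D *m _) -mulmxA; apply: DS; first lia.
by apply: IH; lia.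
Qed.

Lemma krylov_S y : in_krylov D b k y -> Sp qf k y.
Proof.
move=> [cs ->]; apply: Sp_sum => i; apply: SpZ.
apply: (@Sp_mono _ _ _ i.+1); first exact: ltn_ord.
exact: Kry_S.
Qed.

Lemma DK m y : Sp Kf m y -> Sp Kf m.+1 (D *m y).
Proof.
move=> [c ->]; exists (fun i => if i is i'.+1 then c i' else 0).
rewrite big_ord_recl /= scale0r add0r mulmx_sumr; apply: eq_bigr => i _.
by rewrite -scalemxAr mulmxA exprS.
Qed.

Hypothesis c2nz : c2 != 0.

Lemma VK m y : Sp Kf m y -> Sp Kf m.+1 (V *m y).
Proof.
move=> hy.
have -> : V *m y = c2^-1 *: (D *m y - c1 *: y).
  rewrite mulmxDl mul_scalar_mx addrC addKr -scalemxAl scalerA mulVf ?scale1r //.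
apply: SpZ; apply: SpB; first exact: DK.
by apply: SpZ; apply: (Sp_mono (leqnSn m)).
Qed.

Lemma qK j : (1 <= j <= k)%N -> Sp Kf j (q j).
Proof.
elim/ltn_ind: j => j IH hj.
case: j IH hj => [|[|j]] IH hj; first by lia.
  case: Ha => _ _ _ -> _; apply: SpZ.
  by have := Sp_f (fun i => D ^+ i *m b) (ltnSn 0); rewrite expr0 mul1mx.
have lsnz : ls j.+1 != 0 by apply: (ls_nz Ha); lia.
have E := arel Ha (_ : (1 <= j.+1 <= k)%N).
rewrite -[q j.+2](scalerK lsnz) E /=; last by lia.
apply: SpZ; apply: SpD; [apply: SpB|].
- by apply: VK; apply: IH; lia.
- by apply: SpZ; apply: (Sp_mono (leqnSn _)); apply: IH; lia.
- apply: SpZ; apply: VK.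
  case: j IH hj lsnz E => [|j] IH hj lsnz E; first by rewrite q0'; apply: Sp0.
  by apply: (Sp_mono (leqnSn _)); apply: IH; lia.
Qed.

Lemma S_krylov y : Sp qf k y -> in_krylov D b k y.
Proof.
move=> [c ->].
have : Sp Kf k (\sum_(i < k) c i *: q i.+1).
  apply: Sp_sum => i; apply: SpZ; apply: (@Sp_mono _ _ _ i.+1); first exact: ltn_ord.
  apply: qK; have := ltn_ord i; lia.
by move=> [d ->]; exists (fun o => d o).
Qed.

End Main.


Lemma leadmx_full (C : numClosedFieldType) n (A : 'M[C]_n) : leadmx n A = A.
Proof. by apply/matrixP => i j; rewrite mxE mxnE. Qed.

Section Main2.
Variables (C : numClosedFieldType) (N : nat) (V : 'M[C]_N) (c1 c2 : C)
  (b : 'cV[C]_N) (k : nat)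
  (q v : nat -> 'cV[C]_N) (l ls u : nat -> C)
  (Lt Ut : 'M[C]_k)
  (alpha : nat -> C) (w x : nat -> 'cV[C]_N).
Hypothesis HV : adjmx V *m V = 1%:M.
Hypothesis bnz : b != 0.
Hypothesis k0 : (0 < k)%N.
Hypothesis Ha : unitary_arnoldi V b k q v l ls u.
Hypothesis HT : Tmx c1 c2 l ls u k = Lt *m Ut.
Hypothesis HL : forall i j : 'I_k, (i < j)%N -> Lt i j = 0.
Hypothesis HLd : forall i : 'I_k, Lt i i != 0.
Hypothesis HU : forall i j : 'I_k, (j < i)%N -> Ut i j = 0.
Hypothesis HUd : forall i : 'I_k, Ut i i = 1.

Local Notation D := (c1%:M + c2 *: V).
Local Notation Ln := (mxn Lt).
Local Notation Un := (mxn Ut).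

Hypothesis Ha1 : alpha 1 = norm2 b / Ln 0 0.
Hypothesis Haj : forall j, (2 <= j <= k)%N ->
  alpha j = (- c2 * ls j.-1) * alpha j.-1 / Ln j.-1 j.-1.
Hypothesis Hw1 : w 1 = q 1.
Hypothesis Hwj : forall j, (2 <= j <= k)%N ->
  w j = q j + u j *: q j.-1 + ((- c1 * u j.-1.+1) / Ln j.-1.-1 j.-1.-1) *: w j.-1.
Hypothesis Hx0 : x 0 = 0.
Hypothesis Hxj : forall j, (1 <= j <= k)%N -> x j = x j.-1 + alpha j *: w j.

Lemma UnS a : (a.+1 < k)%N -> Un a a.+1 = c1 * u a.+2 / Ln a a.
Proof.
move=> ak; rewrite -(E4 HT HL HLd ak) mulrC mulKf //.
by apply: (Lnd HLd); lia.
Qed.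

Lemma ltrec j : (2 <= j <= k)%N ->
  Ln j.-1 j.-1 = c1 + c2 * l j - (- c2 * ls j.-1) * (- c1 * u j.-1.+1) / Ln j.-1.-1 j.-1.-1.
Proof.
case: j => [|[|a]] // ha.
rewrite /= (E5 HT HL HU HUd (_ : (a.+1 < k)%N)); last by lia.
rewrite (E2 HT HU HUd (_ : (a.+1 < k)%N)); last by lia.
rewrite UnS; last by lia.
ring.
Qed.

Lemma Wmx j : (j <= k)%N -> Qmx w j *m leadmx j Ut = Qmx q j *m Umx u j.
Proof.
move=> jk; apply/matrixP => r a; rewrite (QU_entry bnz k0 Ha) mxE.
have ha := ltn_ord a.
rewrite (eq_bigr (fun s : 'I_j => w (s : nat).+1 r 0 * Un s a)); last first.
  by move=> s _; rewrite !mxE.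
case: (a : nat) ha => [|a'] ha.
  rewrite (@sum_nat1 _ j 0 (fun s => w s.+1 r 0 * Un s 0)) //.
    by rewrite (Und HUd) ?mulr1 ?Hw1 ?(q0' Ha) ?mxE ?mulr0 ?addr0 //; lia.
  by move=> s _ s0; rewrite (Unup HU) ?mulr0 //; lia.
rewrite (@sum_nat2 _ j a' (fun s => w s.+1 r 0 * Un s a'.+1)) //.
  rewrite (Und HUd); last by lia.
  rewrite (Hwj (_ : (2 <= a'.+2 <= k)%N)) /=; last by lia.
  rewrite UnS; last by lia.
  rewrite !mxE; ring.
move=> s _ h1 h2; case: (ltnP s a') => h.
  by rewrite (E3 HT HL HLd) ?mulr0 //; lia.
by rewrite (Unup HU) ?mulr0 //; lia.
Qed.

Lemma w_formula j : (1 <= j <= k)%N ->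
  w j = Qmx q j *m Umx u j *m invmx (leadmx j Ut) *m ecol j j.-1.
Proof.
move=> hj; rewrite -Wmx; last by lia.
rewrite mulmxK ?(lead_U_unit HU HUd) //; last by lia.
rewrite Qmx_col; last by lia.
by rewrite prednK //; lia.
Qed.

Lemma Lh j : (j <= k)%N ->
  leadmx j Lt *m (\col_(a < j) alpha a.+1) = norm2 b *: ecol j 0.
Proof.
move=> jk; apply/matrixP => a c; rewrite ord1 !mxE.
have ha := ltn_ord a.
rewrite (eq_bigr (fun s : 'I_j => Ln a s * alpha (s : nat).+1)); last first.
  by move=> s _; rewrite !mxE.
case: (a : nat) ha => [|a'] ha.
  rewrite (@sum_nat1 _ j 0 (fun s => Ln 0 s * alpha s.+1)) //.
    rewrite Ha1 mulrC -mulrA mulVf ?mulr1 //.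
    by apply: (Lnd HLd); lia.
  by move=> s _ s0; rewrite (Lnlow HL) ?mul0r //; lia.
rewrite (@sum_nat2 _ j a' (fun s => Ln a'.+1 s * alpha s.+1)) //.
  rewrite (E2 HT HU HUd); last by lia.
  rewrite (Haj (_ : (2 <= a'.+2 <= k)%N)) /=; last by lia.
  rewrite [Ln _ _ * _]mulrC divfK; last by apply: (Lnd HLd); lia.
  by rewrite mulr0; ring.
move=> s _ h1 h2; case: (ltnP s a') => h.
  by rewrite (E1 HT HU HUd) ?mul0r //; lia.
by rewrite (Lnlow HL) ?mul0r //; lia.
Qed.

Lemma alpha_formula j : (1 <= j <= k)%N ->
  alpha j = norm2 b * ((ecol j j.-1)^T *m invmx (Tmx c1 c2 l ls u j) *m ecol j 0) 0 0.
Proof.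
move=> hj; have jk : (j <= k)%N by lia.
have uL := lead_L_unit HL HLd jk; have uU := lead_U_unit HU HUd jk.
rewrite (lead_fact HT HL jk).
set Lj := leadmx j Lt; set Uj := leadmx j Ut.
set g := invmx (Lj *m Uj) *m ecol j 0.
have uT : Lj *m Uj \in unitmx by rewrite unitmx_mul uL uU.
have h1 : Lj *m (Uj *m g) = ecol j 0 by rewrite mulmxA mulKVmx.
have h2 : Lj *m ((norm2 b)^-1 *: \col_(a < j) alpha a.+1) = ecol j 0.
  by rewrite -scalemxAr Lh // scalerA mulVf ?scale1r // nb_nz.
have h3 : Uj *m g = (norm2 b)^-1 *: \col_(a < j) alpha a.+1.
  by rewrite -(mulKmx uL (Uj *m g)) h1 -h2 mulKmx.
have oj : (j.-1 < j)%N by lia.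
set o := Ordinal oj.
have e1 : (Uj *m g) o 0 = g o 0.
  rewrite mxE (bigD1 o) //= big1 ?addr0.
    by rewrite mxE (Und HUd) ?mul1r // /o /=; lia.
  move=> s ne; rewrite mxE (Unup HU) ?mul0r //.
  by have := ltn_ord s; rewrite -(inj_eq val_inj) /= in ne; rewrite /o /=; lia.
have e2 : ((ecol j j.-1)^T *m g) 0 0 = g o 0.
  rewrite mxE (bigD1 o) //= big1 ?addr0.
    by rewrite !mxE eqxx mul1r.
  move=> s ne; rewrite !mxE; rewrite -(inj_eq val_inj) /= in ne.
  by rewrite (negbTE ne) mul0r.
rewrite -mulmxA -/g e2 -e1 h3 !mxE /= prednK; last by lia.
by rewrite mulrA divff ?mul1r // nb_nz.
Qed.

Lemma x_sum j : (j <= k)%N -> x j = Qmx w j *m \col_(a < j) alpha a.+1.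
Proof.
elim: j => [_|j IH jk]; first by rewrite Hx0 QmxE big_ord0.
rewrite (Hxj (_ : (1 <= j.+1 <= k)%N)) /=; last by lia.
rewrite IH; last by lia.
rewrite !QmxE big_ord_recr /= !mxE; congr (_ + _).
by apply: eq_bigr => i _; rewrite !mxE.
Qed.

Lemma T_unit : Tmx c1 c2 l ls u k \in unitmx.
Proof.
rewrite HT unitmx_mul.
have := lead_L_unit HL HLd (leqnn k); have := lead_U_unit HU HUd (leqnn k).
by rewrite !leadmx_full => -> ->.
Qed.

Lemma xz z : Tmx c1 c2 l ls u k *m z = norm2 b *: ecol k 0 ->
  x k = Qmx q k *m Umx u k *m z.
Proof.
move=> Hz.
have uL : Lt \in unitmx by have := lead_L_unit HL HLd (leqnn k); rewrite leadmx_full.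
have uU : Ut \in unitmx by have := lead_U_unit HU HUd (leqnn k); rewrite leadmx_full.
have hw : Qmx w k = Qmx q k *m Umx u k *m invmx Ut.
  by rewrite -(Wmx (leqnn k)) leadmx_full mulmxK.
have hz : Ut *m z = \col_(a < k) alpha a.+1.
  have := Lh (leqnn k); rewrite leadmx_full => hL.
  by rewrite -(mulKmx uL (Ut *m z)) [Lt *m (Ut *m z)]mulmxA -HT Hz -hL mulKmx.
by rewrite (x_sum (leqnn k)) hw -hz -!mulmxA mulKmx.
Qed.

Local Notation qf := (fun i => q i.+1).

Lemma QSp (z : 'cV[C]_k) : Sp qf k (Qmx q k *m z).
Proof.
exists (fun i => mxn z i 0); rewrite QmxE; apply: eq_bigr => i _.
by rewrite (mxnE z i 0).
Qed.

Lemma SpK_krylov y : Sp (fun i => D ^+ i *m b) k y -> in_krylov D b k y.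
Proof. by move=> [d ->]; exists (fun o => d o). Qed.

Lemma b_krylov : in_krylov D b k b.
Proof.
apply: SpK_krylov.
by have := Sp_f (fun i => D ^+ i *m b) k0; rewrite expr0 mul1mx.
Qed.

Definition z0 := invmx (Tmx c1 c2 l ls u k) *m (norm2 b *: ecol k 0).
Lemma Hz0 : Tmx c1 c2 l ls u k *m z0 = norm2 b *: ecol k 0.
Proof. by rewrite /z0 mulKVmx // T_unit. Qed.

Lemma resid_orth z : Tmx c1 c2 l ls u k *m z = norm2 b *: ecol k 0 ->
  forall i : 'I_k, dotc (q i.+1) (b - D *m (Qmx q k *m Umx u k *m z)) = 0.
Proof.
move=> Hz i; rewrite dotcBr (qb HV bnz k0 Ha) (GC c1 c2 HV bnz k0 Ha) Hz !mxE.
by rewrite subrr.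
Qed.

Lemma orth_claim y : in_krylov D b k y -> dotc y (b - D *m x k) = 0.
Proof.
move=> /(krylov_S bnz k0 Ha) [c ->]; rewrite (xz Hz0) dotc_suml big1 // => i _.
by rewrite dotcZl resid_orth ?mulr0 // Hz0.
Qed.

Lemma c1nz : c2 = 0 -> c1 != 0.
Proof.
move=> c20; have := E0 HT HL HUd k0; rewrite c20 mul0r addr0 => <-.
by apply: (Lnd HLd).
Qed.

Lemma xk_c20 : c2 = 0 -> x k = c1^-1 *: b.
Proof.
move=> c20; have c1n := c1nz c20.
have hT : Tmx c1 c2 l ls u k = c1 *: Umx u k by rewrite /Tmx c20 scale0r addr0.
have hU : Umx u k *m z0 = c1^-1 *: (norm2 b *: ecol k 0).
  by rewrite -Hz0 hT -scalemxAl scalerA mulVf ?scale1r.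
rewrite (xz Hz0) -mulmxA hU -!scalemxAr Qmx_col // scalerA.
by rewrite [in RHS](bq1 bnz Ha) scalerA.
Qed.

Lemma xk_krylov : in_krylov D b k (x k).
Proof.
have [c20|c2n] := eqVneq c2 0.
  rewrite xk_c20 //; apply: SpK_krylov; apply: SpZ.
  by have := Sp_f (fun i => D ^+ i *m b) k0; rewrite expr0 mul1mx.
apply: (S_krylov c1 bnz k0 Ha c2n).
by rewrite (xz Hz0) -mulmxA; apply: QSp.
Qed.

Lemma Umx_unit m : Umx u m \in unitmx.
Proof.
rewrite -unitmx_tr unitmxE det_trig.
  by rewrite big1 ?unitr1 // => i _; rewrite !mxE eqxx.
apply/is_trig_mxP => i j h; rewrite !mxE.
rewrite (_ : (j == i :> nat) = false); last by lia.
by rewrite (_ : (i == j.+1 :> nat) = false) //; lia.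
Qed.

Lemma unique_claim x' : in_krylov D b k x' ->
  (forall y, in_krylov D b k y -> dotc y (b - D *m x') = 0) -> x' = x k.
Proof.
move=> hx' H.
have [c20|c2n] := eqVneq c2 0.
  have DE : forall y : 'cV[C]_N, D *m y = c1 *: y.
    by move=> y; rewrite c20 scale0r addr0 mul_scalar_mx.
  have hb := bq1 bnz Ha.
  have hK : forall i, Sp qf 1 (D ^+ i *m b).
    elim=> [|i IH]; first by rewrite expr0 mul1mx {1}hb; apply: SpZ; apply: (Sp_f qf (ltnSn 0)).
    by rewrite exprS -[D * _]/(D *m _) -mulmxA DE; apply: SpZ.
  have [cs hcs] := hx'.
  have : Sp qf 1 x' by rewrite hcs; apply: Sp_sum => i; apply: SpZ.
  move=> [c]; rewrite big_ord1 /= => hx.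
  have := H b b_krylov; rewrite hx DE.
  have E : b - c1 *: (c 0 *: q 1) = (norm2 b - c1 * c 0) *: q 1.
    by rewrite {1}hb scalerA scalerBl.
  rewrite E dotcZr [X in dotc X _]hb dotcZl (qq HV bnz k0 Ha) //= mulr1 => /eqP.
  rewrite mulf_eq0 => /orP[|]; last by rewrite conjC_eq0 (negbTE (nb_nz bnz)).
  rewrite subr_eq0 => /eqP e.
  rewrite xk_c20 // [in RHS]hb e scalerA mulrA mulVf ?mul1r //.
  exact: c1nz.
have [c hc] := krylov_S bnz k0 Ha hx'.
set cv := \col_(a < k) c a.
have hx : x' = Qmx q k *m cv.
  by rewrite hc QmxE; apply: eq_bigr => i _; rewrite mxE.
set z' := invmx (Umx u k) *m cv.
have hx2 : x' = Qmx q k *m Umx u k *m z'.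
  by rewrite -mulmxA mulKVmx ?Umx_unit.
have Tz : Tmx c1 c2 l ls u k *m z' = norm2 b *: ecol k 0.
  apply/matrixP => i j; rewrite ord1.
  have := H (q i.+1) (S_krylov c1 bnz k0 Ha c2n (Sp_f (fun i => q i.+1) (ltn_ord i))).
  rewrite hx2 dotcBr (qb HV bnz k0 Ha) (GC c1 c2 HV bnz k0 Ha) => /eqP.
  by rewrite subr_eq0 => /eqP <-; rewrite !mxE.
by rewrite (xz Tz) hx2.
Qed.

End Main2.

Theorem mainTheorem5 (C : numClosedFieldType) (N : nat) (V : 'M[C]_N) (c1 c2 : C)
  (b : 'cV[C]_N) (k : nat)
  (q v : nat -> 'cV[C]_N) (l ls u : nat -> C)
  (Lt Ut : 'M[C]_k)
  (alpha : nat -> C) (w x : nat -> 'cV[C]_N) :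
  unitary_matrix V ->
  c1 \is Num.real -> c2 \is Num.real ->
  b != 0 ->
  (0 < k)%N ->
  unitary_arnoldi V b k q v l ls u ->
  (* LU factorization of T_k *)
  Tmx c1 c2 l ls u k = Lt *m Ut ->
  (forall i j : 'I_k, (i < j)%N -> Lt i j = 0) ->
  (forall i : 'I_k, Lt i i != 0) ->
  (forall i j : 'I_k, (j < i)%N -> Ut i j = 0) ->
  (forall i : 'I_k, Ut i i = 1) ->
  let D := c1%:M + c2 *: V in
  let beta := fun j : nat => - c2 * ls j in          (* beta_j = -c2 l_{j+1,j} *)
  let gamma := fun j : nat => - c1 * u j.+1 in       (* gamma_j = -c1 u_{j,j+1} *)
  let lt := fun j : nat => mxn Lt j.-1 j.-1 in      (* lt j = tilde l_{jj} *)
  (* definitions of alpha_j, w_j, x_j *)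
  alpha 1%N = norm2 b / lt 1%N ->
  (forall j, (2 <= j <= k)%N -> alpha j = beta j.-1 * alpha j.-1 / lt j) ->
  w 1%N = q 1%N ->
  (forall j, (2 <= j <= k)%N ->
     w j = q j + u j *: q j.-1 + (gamma j.-1 / lt j.-1) *: w j.-1) ->
  x 0%N = 0 ->
  (forall j, (1 <= j <= k)%N -> x j = x j.-1 + alpha j *: w j) ->
  [/\ (* recurrence for the diagonal of tilde L_k *)
      lt 1%N = c1 + c2 * l 1%N /\
      (forall j, (2 <= j <= k)%N ->
         lt j = c1 + c2 * l j - beta j.-1 * gamma j.-1 / lt j.-1),
      (* w_j = Q_j U_j tilde U_j^{-1} e_j *)
      (forall j, (1 <= j <= k)%N ->
         w j = Qmx q j *m Umx u j *m invmx (leadmx j Ut) *m ecol j j.-1),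
      (* alpha_j = ||b|| e_j^T T_j^{-1} e_1 *)
      (forall j, (1 <= j <= k)%N ->
         alpha j = norm2 b * ((ecol j j.-1)^T *m invmx (Tmx c1 c2 l ls u j)
                              *m ecol j 0) 0 0),
      (* x_k is the unique Krylov vector with residual orthogonal to K_k *)
      [/\ in_krylov D b k (x k),
          (forall y, in_krylov D b k y -> dotc y (b - D *m x k) = 0) &
          (forall x', in_krylov D b k x' ->
             (forall y, in_krylov D b k y -> dotc y (b - D *m x') = 0) ->
             x' = x k)] /\
      (* namely x_k = Q_k U_k z_k with T_k z_k = ||b|| e_1 *)
      ((exists z : 'cV[C]_k, Tmx c1 c2 l ls u k *m z = norm2 b *: ecol k 0) /\
       (forall z : 'cV[C]_k, Tmx c1 c2 l ls u k *m z = norm2 b *: ecol k 0 ->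
          x k = Qmx q k *m Umx u k *m z)) &
      (* residual update *)
      (forall j, (1 <= j <= k)%N ->
         b - D *m x j = (b - D *m x j.-1) - alpha j *: (D *m w j))].
Proof.
Proof.
move=> [HV _] c1r c2r bnz k0 Ha HT HL HLd HU HUd D beta gamma lt Ha1 Haj Hw1 Hwj Hx0 Hxj.
split.
- split; first exact: (E0 HT HL HUd k0).
  move=> j hj; exact: (ltrec bnz k0 HT HL HLd HU HUd hj).
- move=> j hj; exact: (w_formula bnz k0 Ha HT HL HLd HU HUd Hw1 Hwj hj).
- move=> j hj; exact: (alpha_formula bnz k0 HT HL HLd HU HUd Ha1 Haj hj).
- split.
  + split.
    * exact: (xk_krylov bnz k0 Ha HT HL HLd HU HUd Ha1 Haj Hw1 Hwj Hx0 Hxj).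
    * move=> y hy; exact: (orth_claim HV bnz k0 Ha HT HL HLd HU HUd Ha1 Haj Hw1 Hwj Hx0 Hxj hy).
    * move=> x' hx' H; exact: (unique_claim HV bnz k0 Ha HT HL HLd HU HUd Ha1 Haj Hw1 Hwj Hx0 Hxj hx' H).
  + split.
      exists (invmx (Tmx c1 c2 l ls u k) *m (norm2 b *: ecol k 0)); rewrite mulKVmx //; exact: (T_unit HT HL HLd HU HUd).
    move=> z hz; exact: (xz bnz k0 Ha HT HL HLd HU HUd Ha1 Haj Hw1 Hwj Hx0 Hxj hz).
- move=> j hj; rewrite (Hxj j hj) mulmxDr -scalemxAr opprD addrA //.
Qed.
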